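(* Let $p,q$ be positive integers with $\min\{2,\frac{p}{4}\}\leq q\leq 4p$. Then \[pq+\left\lfloor\frac{1}{2}\binom{q}{2}\right\rfloor\leq \operatorname{diam}(\mathcal{R}(K_{p,q})).\]
   Context: $K_{p,q}$ is the complete bipartite graph with parts of sizes $p$ and $q$. For a connected graph $G$, a search tree on $G$ is a rooted tree with vertex set $V(G)$ defined recursively: its root is some vertex $r\in V(G)$, and the children of $r$ are the roots of search trees on the connected components of $G-r$. For a rooted tree $T$ and $w\in V(T)$, $T|w$ denotes the subtree rooted at $w$. Let $T$ be a search tree on $G$, let $v$ be a child of $u$ in $T$, and let $p$ be the parent of $u$ (if it exists). The $uv$-rotation transforms $T$ into the search tree $T'$ in which: $u$ is a child of $v$ and $v$ is a child of $p$ (or $v$ is the root if $u$ was the root); every subtree of $u$ in $T$ other than $T|v$ is a subtree of $u$ in $T'$; and every subtree $S$ of $v$ in $T$ is a subtree of $u$ in $T'$ if $u$ is adjacent in $G$ to some vertex of $S$, and a subtree of $v$ in $T'$ otherwise. The rotation graph $\mathcal{R}(G)$ is the graph whose vertices are the search trees on $G$, two being adjacent iff they differ by one rotation. $\operatorname{diam}$ denotes graph diameter. *)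

(* Defs.v *)
From mathcomp Require Import all_boot.
Set Implicit Arguments. Unset Strict Implicit. Unset Printing Implicit Defensive.

Section SearchTrees.
Variable T : finType.
(* a simple graph on T given by a (symmetric, irreflexive) adjacency relation *)
Variable e : rel T.

(* A rooted tree on vertex set T is represented by its parent function:
   par x = Some y iff y is the parent of x; par r = None iff r is the root. *)
Definition rtree := {ffun T -> option T}.

Definition induced_rel (S : {set T}) : rel T :=
  fun a b => [&& e a b, a \in S & b \in S].

Definition comp (S : {set T}) (x : T) : {set T} :=
  [set y in S | connect (induced_rel S) x y].

Definition comps (S : {set T}) : {set {set T}} := [set comp S x | x in S].

Inductive st_on (par : rtree) : {set T} -> T -> Prop :=
| StOn (S : {set T}) (r : T) :
    r \in S ->
    (forall C, C \in comps (S :\ r) ->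
       exists2 c, c \in C & par c = Some r /\ st_on par C c) ->
    st_on par S r.

Definition is_search_tree (par : rtree) : Prop :=
  exists r, par r = None /\ st_on par [set: T] r.

Definition subtree (par : rtree) (w : T) : {set T} :=
  [set x | connect (fun a b => par a == Some b) x w].

(* the uv-rotation, for v a child of u *)
Definition rotate (par : rtree) (u v : T) : rtree :=
  [ffun x => if x == u then Some v
             else if x == v then par u
             else if par x == Some v then
               (if [exists y in subtree par x, e u y] then Some u else Some v)
             else par x].

Definition rot_adj (a b : rtree) : Prop :=
  (exists u v, a v = Some u /\ b = rotate a u v) \/
  (exists u v, b v = Some u /\ a = rotate b u v).

Fixpoint rwalk (a : rtree) (s : seq rtree) : Prop :=
  match s with
  | [::] => True
  | b :: s' => [/\ is_search_tree b, rot_adj a b & rwalk b s']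
  end.

(* N <= diam(R(G)): there are two search trees whose distance in R(G)
   (least length of a walk joining them, infinite if none) is at least N. *)
Definition rot_diam_ge (N : nat) : Prop :=
  exists a b, [/\ is_search_tree a, is_search_tree b &
    forall s : seq rtree, rwalk a s -> last a s = b -> N <= size s].

End SearchTrees.

Definition Kpq_rel (p q : nat) : rel ('I_p + 'I_q)%type :=
  fun x y => match x, y with
             | inl _, inr _ => true
             | inr _, inl _ => true
             | _, _ => false
             end.
Arguments Kpq_rel : clear implicits.

(* Main.v *)
Require Import Defs.
From mathcomp Require Import all_boot zify.
From Stdlib Require Import ClassicalEpsilon.
Set Implicit Arguments. Unset Strict Implicit. Unset Printing Implicit Defensive.

Definition pb (P : Prop) : bool :=
  if excluded_middle_informative P then true else false.
Lemma pbP (P : Prop) : reflect P (pb P).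
Proof. rewrite /pb; case: excluded_middle_informative => h; by constructor. Qed.

Section Anc.
Variable T : finType.
Implicit Types (t : rtree T) (x y z w : T).

Fixpoint up t n y : option T :=
  match n with
  | 0 => Some y
  | n'.+1 => if up t n' y is Some z then t z else None
  end.

Definition anc t x y := exists n, up t n.+1 y = Some x.

Lemma up_add t n m y :
  up t (n + m) y = if up t n y is Some z then up t m z else None.
Proof.
elim: m => [|m IH]; first by rewrite addn0; case: (up t n y).
rewrite addnS /= IH; case: (up t n y) => //.
Qed.

Lemma up1 t y : up t 1 y = t y.
Proof. by []. Qed.

Lemma anc_par t x y : t y = Some x -> anc t x y.
Proof. by move=> h; exists 0. Qed.

Lemma anc_trans t x y z : anc t x y -> anc t y z -> anc t x z.
Proof.
move=> [n hn] [m hm]; exists (m.+1 + n).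
by rewrite -addnS up_add hm.
Qed.

Lemma anc_inv t x y : anc t x y ->
  t y = Some x \/ exists2 z, t y = Some z & anc t x z.
Proof.
case=> [[|n]] h; first by left.
right; move: h; rewrite -add1n up_add up1.
case: (t y) => [z|] //= h; exists z => //; by exists n.
Qed.

Lemma anc_ind t (P : T -> T -> Prop) :
  (forall x y, t y = Some x -> P x y) ->
  (forall x y z, t y = Some z -> anc t x z -> P x z -> P x y) ->
  forall x y, anc t x y -> P x y.
Proof.
move=> h1 h2 x y [n]; elim: n y => [|n IH] y; first exact: h1.
rewrite -add1n up_add up1; case ey: (t y) => [z|] // hz.
apply: (h2 x y z ey); [by exists n | exact: IH].
Qed.

Lemma anc_chain t x y z : anc t x y -> anc t z y ->
  x = z \/ anc t x z \/ anc t z x.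
Proof.
move=> [n hn] [m hm].
case: (ltngtP n m) => hnm.
- right; right; exists (m - n).-1.
  have e : m.+1 = n.+1 + (m - n).-1.+1 by lia.
  by move: hm; rewrite e up_add hn.
- right; left; exists (n - m).-1.
  have e : n.+1 = m.+1 + (n - m).-1.+1 by lia.
  by move: hn; rewrite e up_add hm.
- by left; subst; move: hn; rewrite hm => -[].
Qed.

Definition acyclic t := forall x, ~ anc t x x.

Lemma anc_asym t x y : acyclic t -> anc t x y -> ~ anc t y x.
Proof. by move=> ac h1 h2; apply: (ac x); apply: anc_trans h1 h2. Qed.

Lemma anc_neq t x y : acyclic t -> anc t x y -> x <> y.
Proof. by move=> ac h e; subst; exact: ac h. Qed.

Lemma up_None t n m y : up t n y = None -> n <= m -> up t m y = None.
Proof.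
move=> h /subnKC <-; rewrite addnC.
by rewrite addnC up_add h.
Qed.

Lemma acyclic_root t r : t r = None -> (forall x, x = r \/ anc t r x) -> acyclic t.
Proof.
move=> hr hall x [n hn].
have hper : forall k, up t (k * n.+1) x = Some x.
  elim=> [|k IH] //; by rewrite mulSn up_add hn.
have [m hm] : exists m, up t m x = None.
  case: (hall x) => [->|[m hm]]; first by exists 1.
  exists m.+2; by rewrite -addn1 up_add hm /= hr.
have := up_None hm (_ : m <= m * n.+1).
rewrite hper => /(_ _) h; have : m <= m * n.+1 by rewrite leq_pmulr.
by move/h.
Qed.

End Anc.

Section ST.
Variable T : finType.
Variable e : rel T.
Implicit Types (t : rtree T) (x y z w : T).

Definition below t r x := x = r \/ anc t r x.

Lemma st_on_ind2 t (P : {set T} -> T -> Prop) :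
  (forall (S : {set T}) (r : T), r \in S ->
     (forall C, C \in comps e (S :\ r) ->
        exists2 c, c \in C & t c = Some r /\ st_on e t C c /\ P C c) ->
     P S r) ->
  forall S r, st_on e t S r -> P S r.
Proof.
move=> hP; refine (fix F S r (H : st_on e t S r) {struct H} : P S r := _).
refine (match H in st_on _ _ S1 r1 return P S1 r1 with
          StOn S0 r0 hr hC => hP S0 r0 hr (fun C HC => _) end).
refine (match hC C HC with ex_intro2 c h1 (conj h2 h3) => _ end).
exact: (ex_intro2 _ _ c h1 (conj h2 (conj h3 (F C c h3)))).
Defined.

Lemma st_on_props t S r : st_on e t S r ->
  (forall x, x \in S -> below t r x) /\
  (forall x y, x \in S -> y \in S -> x != y -> e x y -> anc t x y \/ anc t y x).
Proof.
move=> H; elim/st_on_ind2: H => {}S {}r hr hC.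
have hcomp : forall x, x \in S :\ r -> exists2 c, c \in Defs.comp e (S :\ r) x &
   t c = Some r /\ ((forall x0, x0 \in Defs.comp e (S :\ r) x -> below t c x0) /\
  (forall a b, a \in Defs.comp e (S :\ r) x -> b \in Defs.comp e (S :\ r) x -> a != b -> e a b -> anc t a b \/ anc t b a)).
  move=> x hx; have [|c h1 [h2 [_ h3]]] := hC (Defs.comp e (S :\ r) x).
    apply/imsetP; by exists x.
  by exists c.
have xin : forall x, x \in S :\ r -> x \in Defs.comp e (S :\ r) x.
  by move=> x hx; rewrite inE hx connect0.
split.
- move=> x hxS; case: (eqVneq x r) => [->|hxr]; first by left.
  have hx : x \in S :\ r by rewrite !inE hxr.
  have [c hc [hpc [h1 _]]] := hcomp x hx.
  right; case: (h1 x (xin x hx)) => [->|h]; first exact: anc_par.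
  exact: anc_trans (anc_par hpc) h.
- move=> x y hxS hyS hxy hexy.
  case: (eqVneq x r) => [exr|hxr].
    subst; left.
    have hy : y \in S :\ r by rewrite !inE eq_sym hxy.
    have [c hc [hpc [h1 _]]] := hcomp y hy.
    case: (h1 y (xin y hy)) => [->|h]; first exact: anc_par.
    exact: anc_trans (anc_par hpc) h.
  case: (eqVneq y r) => [eyr|hyr].
    subst; right.
    have hx : x \in S :\ r by rewrite !inE hxr.
    have [c hc [hpc [h1 _]]] := hcomp x hx.
    case: (h1 x (xin x hx)) => [->|h]; first exact: anc_par.
    exact: anc_trans (anc_par hpc) h.
  have hx : x \in S :\ r by rewrite !inE hxr.
  have hy : y \in S :\ r by rewrite !inE hyr.
  have [c hc [hpc [_ h2]]] := hcomp x hx.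
  apply: h2 => //; first exact: xin.
  rewrite inE hy /=; apply: connect1; by rewrite /induced_rel hexy hx hy.
Qed.

Definition good t :=
  acyclic t /\ (forall x y, x != y -> e x y -> anc t x y \/ anc t y x).

Lemma search_good t : is_search_tree e t -> good t.
Proof.
case=> r [hr hst]; have [h1 h2] := st_on_props hst.
split; last by move=> x y; apply: h2; rewrite inE.
apply: (acyclic_root hr) => x; exact: h1.
Qed.

End ST.

Section Rot.
Variable T : finType.
Variable e : rel T.
Implicit Types (t : rtree T) (x y z w : T).

Variables (t : rtree T) (u v : T).
Hypothesis huv : t v = Some u.
Hypothesis act : acyclic t.
Let t' := rotate e t u v.
Hypothesis act' : acyclic t'.

Lemma rot_cases z :
  (z = u /\ t' z = Some v) \/ (z = v /\ z <> u /\ t' z = t u) \/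
  (z <> u /\ z <> v /\ t z = Some v /\ (t' z = Some u \/ t' z = Some v)) \/
  (z <> u /\ z <> v /\ t z <> Some v /\ t' z = t z).
Proof.
rewrite /t' /rotate ffunE.
case: (eqVneq z u) => [ezu|hzu]; first by left.
have hzu' : z <> u by exact/eqP.
case: (eqVneq z v) => [ezv|hzv].
  by right; left.
have hzv' : z <> v by exact/eqP.
case: (eqVneq (t z) (Some v)) => [hz|hz].
  right; right; left; do 3 (split; first by []).
  by case: ifP; [left|right].
have hz' : t z <> Some v by exact/eqP.
by right; right; right.
Qed.

Lemma anc_uv : anc t u v.
Proof. exact: anc_par. Qed.

Lemma rot_R1 z w : anc t' w z -> w = v \/ anc t w z.
Proof.
pose D w := w = z \/ anc t w z.
pose U := u = z \/ anc t u z.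
have DU : D u -> U by [].
have Dpar : forall a b, D a -> t a = Some b -> anc t b z.
  move=> a b [->|h] hb; first exact: anc_par.
  exact: anc_trans (anc_par hb) h.
have inv : forall n w, up t' n z = Some w ->
   D w \/ (w = v /\ U) \/ (anc t w u /\ U).
  elim=> [|n IH] w0 /=; first by move=> [<-]; left; left.
  case ew: (up t' n z) => [w1|] // hw1.
  case: (IH w1 ew) => [hD|[[e1 hU]|[ha hU]]].
  - have [[e1 e2]|[[e1 [e2 e3]]|[[e1 [e2 [e3 e4]]]|[e1 [e2 [e3 e4]]]]]] := rot_cases w1.
    + subst; right; left; move: hw1; rewrite e2 => -[<-]; split=> //; by left.
    + subst; move: hw1; rewrite e3 => hw1.
      have hUz : anc t u z.
        case: hD => [<-|h]; first exact: anc_uv.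
        exact: anc_trans anc_uv h.
      right; right; split; [exact: anc_par|by right].
    + have hvz : anc t v z := Dpar _ _ hD e3.
      have hUz : anc t u z := anc_trans anc_uv hvz.
      case: e4 => e4; move: hw1; rewrite e4 => -[<-].
        by left; right.
      by right; left; split=> //; right.
    + left; right; move: hw1; rewrite e4; exact: Dpar.
  - subst w1; have [[e1 _]|[[_ [_ e3]]|[[_ [e2 _]]|[_ [e2 _]]]]] := rot_cases v.
    + by have := anc_uv; rewrite e1 => /act.
    + move: hw1; rewrite e3 => hw1; right; right; split=> //; exact: anc_par.
    + by case: e2.
    + by case: e2.
  - have [[e1 _]|[[e1 _]|[[e1 [e2 [e3 _]]]|[e1 [e2 [e3 e4]]]]]] := rot_cases w1.
    + by subst; case: (act ha).
    + by subst; case: (act (anc_trans ha anc_uv)).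
    + by case: (act (anc_trans (anc_par e3) (anc_trans ha anc_uv))).
    + move: hw1; rewrite e4 => hw1; right; right; split=> //.
      exact: anc_trans (anc_par hw1) ha.
move=> [n hn]; case: (inv _ _ hn) => [[e1|h]|[[-> _]|[ha [e1|hU]]]].
- by subst; case: (act' (ex_intro _ n hn)).
- by right.
- by left.
- by subst; right.
- by right; exact: anc_trans ha hU.
Qed.

Lemma rot_R2 y : anc t y u -> forall n, up t' n y = up t n y.
Proof.
move=> hy.
have key : forall n, up t' n y = up t n y /\
   (up t n y = None \/ exists2 w, up t n y = Some w & anc t w u).
  elim=> [|n [IH1 IH2]] /=; first by split=> //; right; exists y.
  rewrite IH1; case: IH2 => [->|[w -> hw]]; first by split=> //; left.
  have [[e1 _]|[[e1 _]|[[e1 [e2 [e3 _]]]|[e1 [e2 [e3 e4]]]]]] := rot_cases w.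
  + by subst; case: (act hw).
  + by subst; case: (act (anc_trans hw anc_uv)).
  + by case: (act (anc_trans (anc_par e3) (anc_trans hw anc_uv))).
  + rewrite e4; split=> //; case ew: (t w) => [w'|]; last by left.
    right; exists w' => //; exact: anc_trans (anc_par ew) hw.
by move=> n; case: (key n).
Qed.

Definition sw (a b : rtree T) x y :=
  (anc a x y /\ anc b y x) \/ (anc a y x /\ anc b x y).

Lemma rot_sw x y : sw t t' x y -> (x = u /\ y = v) \/ (x = v /\ y = u).
Proof.
have main : forall x y, anc t x y -> anc t' y x -> x = u /\ y = v.
  move=> a b hab hba.
  case: (rot_R1 hba) => [eb|hb]; last by case: (anc_asym act hab hb).
  subst b; split=> //.
  case: (anc_inv hab) => [|[c hc hac]].
    by rewrite huv => -[].
  move: hc; rewrite huv => -[ec]; subst c.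
  have [n hn] := hba; move: hn; rewrite rot_R2 // => hn.
  by case: (anc_asym act hab (ex_intro _ n hn)).
case=> [[h1 h2]|[h1 h2]]; first by left; exact: main.
by right; have [-> ->] := main _ _ h1 h2.
Qed.

End Rot.

Lemma sw_sym (T : finType) (a b : rtree T) x y : sw a b x y <-> sw b a x y.
Proof. rewrite /sw; tauto. Qed.

Lemma rot_adj_sw (T : finType) (e : rel T) (a b : rtree T) :
  acyclic a -> acyclic b -> rot_adj e a b ->
  exists u v, forall x y, sw a b x y -> (x = u /\ y = v) \/ (x = v /\ y = u).
Proof.
move=> aa ab; case=> -[u [v [h1 eb]]].
  subst b; by exists u, v => x y; apply: rot_sw.
subst a; by exists u, v => x y /sw_sym; apply: rot_sw.
Qed.

Lemma rwalk_nth (T : finType) (e : rel T) a s : rwalk e a s ->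
  forall i, i < size s ->
  is_search_tree e (nth a s i) /\ rot_adj e (nth a (a :: s) i) (nth a s i).
Proof.
elim: s a => [|b s IH] a //= [hb hab hw] [|i] hi //=.
have [h1 h2] := IH b hw i hi.
rewrite (set_nth_default b) //; split=> //.
rewrite (set_nth_default b a) //; last by rewrite /= ltnW.
Qed.

Lemma changes_ge (f : nat -> bool) n k : k <= n ->
  (f 0 != f k) + (f k != f n) <= \sum_(i < n) (f i != f i.+1).
Proof.
have tri : forall a b, a <= b -> (f a != f b) <= \sum_(a <= i < b) (f i != f i.+1).
  move=> a b /subnKC <-; elim: (b - a) => [|d IH]; first by rewrite addn0 eqxx.
  rewrite addnS big_nat_recr /=; last by rewrite leq_addr.
  apply: leq_trans (leq_add IH (leqnn _)).
  by case: (f a); case: (f (a + d)); case: (f (a + d).+1).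
move=> hk; rewrite -(big_mkord xpredT (fun i => (f i != f i.+1) : nat)).
rewrite (@big_cat_nat _ _ _ k 0 n) //.
exact: leq_add (tri _ _ (leq0n k)) (tri _ _ hk).
Qed.

Lemma sum_le1 (I : finType) (P : pred I) :
  (forall a b, P a -> P b -> a = b) -> \sum_(k : I) (P k : nat) <= 1.
Proof.
move=> h; rewrite -big_mkcond /= sum1_card.
by apply/card_le1_eqP => a b ha hb; apply: h.
Qed.

Section Kpq.
Variables p q : nat.
Local Notation T := ('I_p + 'I_q)%type.
Local Notation e := (Kpq_rel p q).
Implicit Types (t : rtree T).

Lemma QQ_incomp t j j' : good e t -> j != j' ->
  ~ anc t (inr j) (inr j') -> ~ anc t (inr j') (inr j) ->
  forall i, anc t (inl i) (inr j).
Proof.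
move=> [ac cmp] hjj h1 h2 i.
case: (cmp (inl i) (inr j) erefl erefl) => // hji.
case: (cmp (inl i) (inr j') erefl erefl) => [h|h].
  by case: h1; exact: anc_trans hji h.
case: (anc_chain hji h) => [[]|[]] // => /eqP; by rewrite (negbTE hjj).
Qed.

Lemma move_le1 (a b : rtree T) : acyclic a -> acyclic b -> rot_adj e a b ->
  \sum_(i : 'I_p) \sum_(j : 'I_q) pb (sw a b (inl i) (inr j)) +
  \sum_(j : 'I_q) \sum_(j' : 'I_q) ((j < j') && pb (sw a b (inr j) (inr j'))) <= 1.
Proof.
move=> aa ab hr; have [u [v huv]] := rot_adj_sw aa ab hr.
have zPQ : (forall i j, ~ sw a b (inl i) (inr j)) ->
    \sum_(i : 'I_p) \sum_(j : 'I_q) pb (sw a b (inl i) (inr j)) = 0.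
  move=> h; apply: big1 => i _; apply: big1 => j _.
  by case: pbP => // /h.
have zQQ : (forall j j' : 'I_q, j < j' -> ~ sw a b (inr j) (inr j')) ->
    \sum_(j : 'I_q) \sum_(j' : 'I_q) ((j < j') && pb (sw a b (inr j) (inr j'))) = 0.
  move=> h; apply: big1 => j _; apply: big1 => j' _.
  by case: ltnP => //= hj; case: pbP => // /(h _ _ hj).
have uPQ : \sum_(i : 'I_p) \sum_(j : 'I_q) pb (sw a b (inl i) (inr j)) <= 1.
  rewrite pair_big /=; apply: (sum_le1 (P := fun k => pb (sw a b (inl k.1) (inr k.2)))).
  move=> [i j] [i' j'] /pbP /huv h1 /pbP /huv h2.
  case: h1 => [[e1 e2]|[e1 e2]]; case: h2 => [[e3 e4]|[e3 e4]]; subst => //.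
  - by case: e3 => ->; case: e4 => ->.
  - by case: e3 => ->; case: e4 => ->.
have uQQ : \sum_(j : 'I_q) \sum_(j' : 'I_q) ((j < j') && pb (sw a b (inr j) (inr j'))) <= 1.
  rewrite pair_big /=; apply: (@sum_le1 _ (fun k : 'I_q * 'I_q => (k.1 < k.2) && pb (sw a b (inr k.1) (inr k.2)))).  
  move=> [i j] [i' j'] /andP [l1 /pbP /huv h1] /andP [l2 /pbP /huv h2] /=.
  simpl in *.
  case: h1 => [[e1 e2]|[e1 e2]]; case: h2 => [[e3 e4]|[e3 e4]]; subst => //.
  - by case: e3 => ->; case: e4 => ->.
  - case: e3 => e3; case: e4 => e4; subst; lia.
  - case: e3 => e3; case: e4 => e4; subst; lia.
  - by case: e3 => ->; case: e4 => ->.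
case: u huv => [i0|j0]; case: v => [i1|j1] huv.
- rewrite zPQ ?zQQ //.
    by move=> j j' _ /huv [[]|[]].
  by move=> i j /huv [[_ ]|[]].
- by rewrite zQQ ?addn0 // => j j' _ /huv [[]|[]].
- by rewrite zQQ ?addn0 // => j j' _ /huv [[]|[]].
- by rewrite zPQ ?add0n // => i j /huv [[]|[]].
Qed.

End Kpq.

Section Walk.
Variables p q : nat.
Local Notation T := ('I_p + 'I_q)%type.
Local Notation e := (Kpq_rel p q).
Implicit Types (t : rtree T).

Lemma pair_lb (tr : nat -> rtree T) n (x y : T) k :
  (forall m, m <= n -> anc (tr m) x y \/ anc (tr m) y x) -> k <= n ->
  (pb (anc (tr 0) y x) != pb (anc (tr k) y x)) +
  (pb (anc (tr k) y x) != pb (anc (tr n) y x))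
   <= \sum_(m < n) pb (sw (tr m) (tr m.+1) x y).
Proof.
move=> hc hk; pose f m := pb (anc (tr m) y x); apply: leq_trans (changes_ge f hk) _.
apply: leq_sum => m _.
have hm : m < n by [].
rewrite /f; case: pbP => h1; case: pbP => h2 //=; case: pbP => // [[]].
- case: (hc m.+1 hm) => // h3; by right.
- case: (hc m (ltnW hm)) => // h3; by left.
Qed.

Lemma walk_bound (a b : rtree T) s :
  good e a -> rwalk e a s -> last a s = b ->
  (forall i j, anc a (inr j) (inl i)) ->
  (forall j j' : 'I_q, j < j' -> anc a (inr j) (inr j')) ->
  (forall j j' : 'I_q, j < j' -> anc b (inr j') (inr j)) ->
  exists S : {set 'I_q},
   \sum_(i : 'I_p) \sum_(j : 'I_q) ((~~ pb (anc b (inr j) (inl i))) +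
          2 * (pb (anc b (inr j) (inl i)) && (j \in S))) +
   \sum_(j : 'I_q) \sum_(j' : 'I_q) ((j < j') && ~~ ((j \in S) && (j' \in S)))
   <= size s.
Proof.
move=> ga hw hlast hA1 hA2 hB.
set n := size s.
pose tr m := nth a (a :: s) m.
have hnth := rwalk_nth hw.
have gtr : forall m, m <= n -> good e (tr m).
  case=> [|m] hm //; apply: search_good; exact: (hnth m hm).1.
have adj : forall m, m < n -> rot_adj e (tr m) (tr m.+1).
  by move=> m hm; exact: (hnth m hm).2.
have tr0 : tr 0 = a by [].
have trn : tr n = b by rewrite /tr -last_nth.
pose S := [set j : 'I_q | pb (exists k, k <= n /\ forall i, anc (tr k) (inl i) (inr j))].
exists S.
have step1 : \sum_(i : 'I_p) \sum_(j : 'I_q) \sum_(m < n) pb (sw (tr m) (tr m.+1) (inl i) (inr j)) +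
   \sum_(j : 'I_q) \sum_(j' : 'I_q) ((j < j') * \sum_(m < n) pb (sw (tr m) (tr m.+1) (inr j) (inr j')))
   <= n.
  rewrite -[X in _ <= X](card_ord n) -sum1_card.
  under [X in X + _ <= _]eq_bigr => i _ do rewrite exchange_big.
  rewrite [X in X + _ <= _]exchange_big /=.
  under [X in _ + X <= _]eq_bigr => j _ do
    under eq_bigr => j' _ do rewrite big_distrr /=.
  under [X in _ + X <= _]eq_bigr => j _ do rewrite exchange_big.
  rewrite [X in _ + X <= _]exchange_big /=.
  rewrite -big_split /=; apply: leq_sum => m _.
  have hm : m < n by [].
  have ga1 := (gtr m (ltnW hm)).1; have ga2 := (gtr m.+1 hm).1.
  apply: leq_trans (move_le1 ga1 ga2 (adj m hm)).
  apply: leq_add; first by [].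
  apply: leq_sum => j _; apply: leq_sum => j' _.
  by rewrite mulnb.
apply: leq_trans step1; apply: leq_add.
- apply: leq_sum => i _; apply: leq_sum => j _.
  have hc : forall m, m <= n -> anc (tr m) (inl i) (inr j) \/ anc (tr m) (inr j) (inl i).
    move=> m hm; exact: (gtr m hm).2 (inl i) (inr j) isT isT.
  have f0 : pb (anc (tr 0) (inr j) (inl i)) = true by apply/pbP; exact: hA1.
  case: (boolP (pb (anc b (inr j) (inl i)))) => hb /=.
  + case: (boolP (j \in S)) => hS; last by rewrite muln0.
    move: hS; rewrite inE => /pbP [k [hk hall]].
    have := pair_lb hc hk; rewrite /= f0 trn hb.
    suff -> : pb (anc (tr k) (inr j) (inl i)) = false by [].
    apply/pbP => h; exact: (anc_asym (gtr k hk).1 (hall i) h).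
  + have := pair_lb hc (leqnn n); rewrite /= f0 trn (negbTE hb) /=.
    by move=> h; exact: h.
- apply: leq_sum => j _; apply: leq_sum => j' _.
  case: (ltnP j j') => hjj' //=; rewrite mul1n.
  case: (boolP ((j \in S) && (j' \in S))) => //= hS.
  have hc : forall m, m <= n -> anc (tr m) (inr j) (inr j') \/ anc (tr m) (inr j') (inr j).
    move=> m hm; case: (pbP (anc (tr m) (inr j') (inr j))) => h1; first by right.
    case: (pbP (anc (tr m) (inr j) (inr j'))) => h2; first by left.
    exfalso; move/negP: hS; apply.
    have hne : j != j' by rewrite neq_ltn hjj'.
    rewrite !inE; apply/andP; split; apply/pbP; exists m; split=> // i.
      exact: (QQ_incomp (gtr m hm) hne).
    by apply: (QQ_incomp (gtr m hm) _ h1 h2); rewrite eq_sym.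
  have := pair_lb hc (leqnn n); rewrite /= trn.
  have -> : pb (anc (tr 0) (inr j') (inr j)) = false.
    apply/pbP => h; exact: (anc_asym ga.1 (hA2 _ _ hjj') h).
  suff -> : pb (anc b (inr j') (inr j)) = true by [].
  by apply/pbP; exact: hB.
Qed.

End Walk.

Section RankTree.
Variable T : finType.
Variable e : rel T.
Variable rk : T -> nat.
Variable k : nat.
Variable x0 : T.
Hypothesis rk_inj : injective rk.
Hypothesis rk_lt : forall x, rk x < #|T|.
Hypothesis k_gt0 : 0 < k.
Hypothesis k_le : k <= #|T|.

Definition elt j := odflt x0 [pick x | rk x == j].
Definition rtr : rtree T :=
  [ffun z => if rk z == 0 then None else Some (elt (minn (rk z) k).-1)].

Lemma rk_surj j : j < #|T| -> exists x, rk x = j.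
Proof.
move=> hj.
pose f (x : T) : 'I_#|T| := Ordinal (rk_lt x).
have finj : injective f by move=> a b [] /rk_inj.
have := inj_card_onto finj (_ : #|{: 'I_#|T|}| <= #|T|) (Ordinal hj).
rewrite card_ord leqnn => /(_ isT) /codomP [x hx].
by exists x; move: hx => /(congr1 val) /= ->.
Qed.

Lemma rk_elt j : j < #|T| -> rk (elt j) = j.
Proof.
move=> hj; rewrite /elt; case: pickP => [x /eqP //|h].
by have [x hx] := rk_surj hj; move: (h x); rewrite hx eqxx.
Qed.

Lemma rtr_some z : rk z != 0 -> rtr z = Some (elt (minn (rk z) k).-1).
Proof. by rewrite ffunE => /negbTE ->. Qed.

Lemma rtr_step z w : rtr z = Some w -> rk w < rk z /\ rk w < k.
Proof.
rewrite ffunE; case: eqP => // hz [<-].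
have h1 := rk_lt z.
rewrite rk_elt; last by lia.
lia.
Qed.

Lemma anc_rtr x z : anc rtr x z <-> rk x < rk z /\ rk x < k.
Proof.
split.
  move: x z; apply: anc_ind.
    by move=> x z /rtr_step.
  move=> x z w /rtr_step [h1 h2] _ [h3 h4]; split=> //; exact: ltn_trans h3 h1.
move=> [h1 h2].
have main : forall N z, rk z <= N -> rk x < rk z -> anc rtr x z.
  elim=> [|N IH] z' hz hxz; first by lia.
  have hz0 : rk z' != 0 by lia.
  have ez := rtr_some hz0.
  have hw : rk (elt (minn (rk z') k).-1) = (minn (rk z') k).-1.
    rewrite rk_elt //; have := rk_lt z'; lia.
  case: (ltngtP (rk x) (minn (rk z') k).-1) => hc.
  - have hw1 : rk x < rk (elt (minn (rk z') k).-1) by rewrite hw.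
    have hw2 : rk (elt (minn (rk z') k).-1) <= N by rewrite hw; lia.
    exact: anc_trans (IH _ hw2 hw1) (anc_par ez).
  - lia.
  - have exw : x = elt (minn (rk z') k).-1 by apply: rk_inj; rewrite hw.
    by rewrite exw; exact: anc_par.
exact: (main (rk z) z (leqnn _) h1).
Qed.

Definition Sr j := [set z | j <= rk z].

Lemma Sdel j : j < #|T| -> Sr j :\ elt j = Sr j.+1.
Proof.
move=> hj; apply/setP => z; rewrite !inE.
have -> : (z == elt j) = (rk z == j).
  apply/eqP/eqP => [->|h]; first by rewrite rk_elt.
  by apply: rk_inj; rewrite rk_elt.
by rewrite ltn_neqAle eq_sym.
Qed.

Hypothesis H1 : forall j, j.+1 < k -> forall z, z \in Sr j.+1 -> Defs.comp e (Sr j.+1) z = Sr j.+1.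
Hypothesis H2 : forall z, z \in Sr k -> Defs.comp e (Sr k) z = [set z].

Lemma rtr_search : is_search_tree e rtr.
Proof.
have main : forall d, d < k -> st_on e rtr (Sr (k.-1 - d)) (elt (k.-1 - d)).
  elim=> [|d IH] hd.
  - rewrite subn0; constructor; first by rewrite inE rk_elt //; lia.
    rewrite Sdel; last by lia.
    have -> : (k.-1).+1 = k by lia.
    move=> C /imsetP [x hx ->]; rewrite H2 //.
    exists x; first by rewrite inE.
    have hx' : k <= rk x by move: hx; rewrite inE.
    split.
      rewrite rtr_some; last by lia.
      by congr (Some (elt _)); lia.
    constructor; first by rewrite inE.
    by rewrite setDv => C' /imsetP [y]; rewrite inE.
  - have hj : (k.-1 - d.+1).+1 = k.-1 - d by lia.
    constructor; first by rewrite inE rk_elt //; lia.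
    rewrite Sdel; last by lia.
    move=> C /imsetP [x hx ->]; rewrite H1 //; last by lia.
    exists (elt (k.-1 - d.+1).+1).
      by rewrite inE rk_elt //; lia.
    split.
      rewrite rtr_some; last by rewrite rk_elt; lia.
      rewrite rk_elt; last by lia.
      by congr (Some (elt _)); lia.
    rewrite hj; apply: IH; lia.
exists (elt 0); split.
  by rewrite ffunE rk_elt ?eqxx //; lia.
have := main k.-1 (_ : k.-1 < k); rewrite subnn.
have -> : Sr 0 = setT by apply/setP => z; rewrite !inE.
apply; lia.
Qed.

End RankTree.

Section Conn.
Variables p q : nat.
Local Notation T := ('I_p + 'I_q)%type.
Local Notation e := (Kpq_rel p q).

Lemma conn_both (S : {set T}) :
  (exists i, inl i \in S) -> (exists j, inr j \in S) ->
  forall z, z \in S -> Defs.comp e S z = S.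
Proof.
move=> [i hi] [j hj] z hz; apply/setP => w; rewrite inE.
case: (boolP (w \in S)) => //= hw.
have st : forall x y, x \in S -> y \in S -> e x y -> connect (induced_rel e S) x y.
  by move=> x y hx hy hxy; apply: connect1; rewrite /induced_rel hxy hx hy.
case: z hz => [a|a] hz; case: w hw => [b|b] hw.
- apply: connect_trans (st _ (inr j) hz hj isT) (st _ _ hj hw isT).
- exact: st.
- exact: st.
- apply: connect_trans (st _ (inl i) hz hi isT) (st _ _ hi hw isT).
Qed.

Lemma conn_single (S : {set T}) z :
  z \in S -> (forall w, w \in S -> w = z) -> Defs.comp e S z = S.
Proof.
move=> hz h; apply/setP => w; rewrite inE.
case: (boolP (w \in S)) => //= hw; by rewrite (h w hw) connect0.
Qed.

Lemma conn_none (S : {set T}) :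
  (forall j, inr j \notin S) -> forall z, z \in S -> Defs.comp e S z = [set z].
Proof.
move=> hS z hz; apply/setP => w; rewrite !inE.
apply/idP/idP => [/andP [hw /connectP [s hp ->]]|/eqP ->]; last by rewrite hz connect0.
case: s hp => [|y s] //= /andP [hy _]; move: hy; rewrite /induced_rel.
case/and3P => hzy hz' hy.
case: z hz hz' hzy => [a|a] ha ha'; case: y hy => [b|b] hb //= _.
  by move: (hS b); rewrite hb.
by move: (hS a); rewrite ha.
Qed.

End Conn.

Lemma card_T p q : #|{: ('I_p + 'I_q)%type}| = p + q.
Proof. by rewrite card_sum !card_ord. Qed.

Ltac ifs := repeat match goal with |- context [if ?b then _ else _] => case: (boolP b) => ? end.

Section Trees.
Variables p q t m : nat.
Hypothesis hq : 0 < q.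
Hypothesis htp : t < p.
Hypothesis hmq : m < q.
Hypothesis ht0 : t = 0 -> m.+1 = q.
Local Notation T := ('I_p + 'I_q)%type.
Local Notation e := (Kpq_rel p q).

Let hp : 0 < p. Proof. exact: leq_ltn_trans (leq0n t) htp. Qed.
Definition x0 : T := inl (Ordinal hp).
Let hq1 : q.-1 < q. Proof. by rewrite prednK. Qed.
Let hq0 : 0 < q. Proof. by []. Qed.
Let hp1 : p.-1 < p. Proof. by rewrite prednK. Qed.

Definition ra (z : T) : nat := match z with inl i => q + i | inr j => j end.
Definition rb (z : T) : nat :=
  match z with
  | inl i => if i < p - t - 1 then val i else if i == p - t - 1 :> nat then p - t - 1 + m else i + q
  | inr j => if q - m <= j then (p - t - 1) + (q - 1 - j) else (p - t + m) + (q - m - 1 - j)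
  end.

Lemma ra_inj : injective ra.
Proof.
move=> [i|j] [i'|j'] /= h.
- by congr inl; apply: val_inj => /=; lia.
- have := ltn_ord j'; lia.
- have := ltn_ord j; lia.
- by congr inr; apply: val_inj.
Qed.

Lemma ra_lt x : ra x < #|{: T}|.
Proof. rewrite card_T; case: x => [i|j] /=; [have := ltn_ord i | have := ltn_ord j]; lia. Qed.

Definition treeA := rtr ra q x0.

Lemma treeA_search : is_search_tree e treeA.
Proof.
apply: (rtr_search x0 ra_inj ra_lt hq); first by rewrite card_T leq_addl.
- move=> j hj z hz; apply: conn_both => //.
    by exists (Ordinal hp); rewrite inE /=; lia.
  by exists (Ordinal hq1); rewrite inE /=; lia.
- move=> z hz; apply: conn_none => // j; rewrite inE /=; have := ltn_ord j; lia.
Qed.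

Let hqk : q <= #|{: T}|. Proof. by rewrite card_T leq_addl. Qed.

Lemma treeA_1 i j : anc treeA (inr j) (inl i).
Proof. apply/(anc_rtr x0 ra_inj ra_lt hq hqk) => /=; have := ltn_ord j; lia. Qed.

Lemma treeA_2 (j j' : 'I_q) : j < j' -> anc treeA (inr j) (inr j').
Proof. move=> h; apply/(anc_rtr x0 ra_inj ra_lt hq hqk) => /=; have := ltn_ord j'; lia. Qed.

Lemma rb_inj : injective rb.
Proof.
move=> [i|j] [i'|j'] /= h.
- congr inl; apply: val_inj => /=; move: h.
  have := ltn_ord i; have := ltn_ord i'.
  by ifs; lia.
- exfalso; move: h; have := ltn_ord i; have := ltn_ord j'.
  by ifs; lia.
- exfalso; move: h; have := ltn_ord i'; have := ltn_ord j.
  by ifs; lia.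
- congr inr; apply: val_inj => /=; move: h.
  have := ltn_ord j; have := ltn_ord j'.
  by ifs; lia.
Qed.

Lemma rb_lt x : rb x < #|{: T}|.
Proof.
rewrite card_T; case: x => [i|j] /=; [have := ltn_ord i | have := ltn_ord j].
  by ifs; lia.
by ifs; lia.
Qed.

Definition treeB := rtr rb (p + q - t) x0.
Let hkb0 : 0 < p + q - t. Proof. lia. Qed.
Let hkb : p + q - t <= #|{: T}|. Proof. rewrite card_T; lia. Qed.

Lemma treeB_search : is_search_tree e treeB.
Proof.
apply: (rtr_search x0 rb_inj rb_lt hkb0 hkb).
- move=> j hj z hz.
  have hin0 : inr (Ordinal hq0) \in Sr rb j.+1.
    by rewrite inE /=; ifs; lia.
  case: (posnP t) => ht.
  + have hm := ht0 ht.
    case: (ltnP j.+1 (p + q - 1)) => hj2.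
    * apply: conn_both => //; last by exists (Ordinal hq0).
      exists (Ordinal hp1); rewrite inE /=.
      ifs; lia.
    * have hs : forall w, w \in Sr rb j.+1 -> w = inr (Ordinal hq0).
        move=> w; rewrite inE => hw.
        apply: rb_inj; move: hw; case: w => [i|j'] /=;
          [have := ltn_ord i | have := ltn_ord j'].
          by ifs; lia.
        by ifs; lia.
      rewrite (hs z hz); exact: conn_single.
  + apply: conn_both => //; last by exists (Ordinal hq0).
    exists (Ordinal hp1); rewrite inE /=.
    ifs; lia.
- move=> z hz; apply: conn_none => // j; rewrite inE /=; have := ltn_ord j.
  ifs; lia.
Qed.

Lemma treeB_2 (j j' : 'I_q) : j < j' -> anc treeB (inr j') (inr j).
Proof.
move=> h; apply/(anc_rtr x0 rb_inj rb_lt hkb0 hkb) => /=; have := ltn_ord j'.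
by ifs; lia.
Qed.

Lemma treeB_1 i j : pb (anc treeB (inr j) (inl i)) = (p - (t + (q - m <= j)) <= i).
Proof.
apply/pbP/idP.
  move/(anc_rtr x0 rb_inj rb_lt hkb0 hkb) => /=; have := ltn_ord j; have := ltn_ord i.
  by ifs; lia.
move=> h; apply/(anc_rtr x0 rb_inj rb_lt hkb0 hkb) => /=; move: h.
have := ltn_ord j; have := ltn_ord i.
by ifs; lia.
Qed.

End Trees.

Lemma sum_ge_cnt n c : \sum_(i < n) (c <= i) = n - c.
Proof.
elim: n => [|n IH]; first by rewrite big_ord0.
rewrite big_ord_recr /= IH; case: leqP => h /=; lia.
Qed.

Lemma sum_lt_cnt n c : c <= n -> \sum_(i < n) ~~ (c <= i) = c.
Proof.
move=> hc.
have : \sum_(i < n) (~~ (c <= i)) + \sum_(i < n) (c <= i) = n.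
  rewrite -big_split /=.
  rewrite (eq_bigr (fun _ => 1)); first by rewrite sum1_card card_ord.
  by move=> i _; case: (c <= i).
rewrite sum_ge_cnt; lia.
Qed.

Lemma bin2_double n : 2 * 'C(n, 2) = n * (n - 1).
Proof.
elim: n => [|n IH] //; rewrite binS bin1 mulnDr IH; nia.
Qed.

Lemma pairs2 q (P : pred 'I_q) :
  2 * (\sum_(j < q) \sum_(j' < q) ((j < j') && (P j && P j'))) =
  (\sum_(j < q) P j) * ((\sum_(j < q) P j) - 1).
Proof.
set s := \sum_(j < q) P j.
set A := \sum_(j < q) \sum_(j' < q) ((j < j') && (P j && P j')).
have A' : \sum_(j < q) \sum_(j' < q) ((j' < j) && (P j && P j')) = A.
  rewrite exchange_big; apply: eq_bigr => j _; apply: eq_bigr => j' _.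
  by rewrite [P j' && _]andbC.
have D : \sum_(j < q) \sum_(j' < q) ((j != j') && (P j && P j')) = A + A.
  rewrite -{2}A' -big_split; apply: eq_bigr => j _; rewrite -big_split.
  apply: eq_bigr => j' _ /=.
  rewrite -(inj_eq val_inj) neq_ltn.
  by case: ltngtP => //=; case: (P j && P j').
have D2 : \sum_(j < q) \sum_(j' < q) ((j != j') && (P j && P j')) = s * (s - 1).
  rewrite big_distrl /=; apply: eq_bigr => j _.
  case: (boolP (P j)) => hj /=; last by rewrite mul0n; apply: big1 => j' _; rewrite andbF.
  rewrite mul1n.
  have hs : s = P j + \sum_(j' < q | j' != j) P j' by rewrite /s (bigD1 j).
  rewrite hs hj add1n subn1 /=.
  rewrite [RHS]big_mkcond; apply: eq_bigr => j' _; rewrite eq_sym; by case: (j' != j).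
by rewrite -D2 D mul2n addnn.
Qed.

Definition ARITH p q t m := forall s0 s1 NB NS TT,
  s0 <= q - m -> s1 <= m -> 2*NB = (s0+s1)*(s0+s1-1) -> 2*TT = q*(q-1) -> NS+NB = TT ->
  p*q + TT %/ 2 <= (p*q - (t*q+m)) + 2*(t*(s0+s1)+s1) + NS.

Lemma main_tm p q t m : 0 < q -> t < p -> m < q -> (t = 0 -> m.+1 = q) ->
  ARITH p q t m -> rot_diam_ge (Kpq_rel p q) (p * q + 'C(q, 2) %/ 2).
Proof.
move=> hq htp hmq ht0 AR.
exists (treeA q htp), (treeB q m htp); split.
- exact: (treeA_search hq htp hmq ht0).
- exact: (treeB_search hq htp hmq ht0).
move=> s hw hl.
have [S hS] := walk_bound (search_good (treeA_search hq htp hmq ht0)) hw hl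
  (treeA_1 hq htp hmq ht0) (treeA_2 hq htp hmq ht0) (treeB_2 hq htp hmq ht0).
move: hS; under eq_bigr => i _ do under eq_bigr => j _ do rewrite (treeB_1 hq htp hmq ht0).
move=> hS; apply: leq_trans hS.
set sS := \sum_(j < q) (j \in S).
set s1 := \sum_(j < q) ((q - m <= j) && (j \in S)).
set s0 := \sum_(j < q) (~~ (q - m <= j) && (j \in S)).
have es : sS = s0 + s1.
  rewrite /sS /s0 /s1 -big_split; apply: eq_bigr => j _.
  by case: (q - m <= j); case: (j \in S).
have hs0 : s0 <= q - m.
  apply: leq_trans (_ : \sum_(j < q) ~~ (q - m <= j) <= q - m).
    by apply: leq_sum => j _; case: (q - m <= j); case: (j \in S).
  rewrite sum_lt_cnt //; lia.
have hs1 : s1 <= m.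
  apply: leq_trans (_ : \sum_(j < q) (q - m <= j) <= m).
    by apply: leq_sum => j _; case: (q - m <= j); case: (j \in S).
  rewrite sum_ge_cnt; lia.
have ePQ : \sum_(i < p) \sum_(j < q) ((~~ (p - (t + (q - m <= j)) <= i)) +
          2 * ((p - (t + (q - m <= j)) <= i) && (j \in S)))
     = (p*q - (t*q+m)) + 2*(t*sS + s1).
  rewrite exchange_big /=.
  have inner : forall j : 'I_q, \sum_(i < p) ((~~ (p - (t + (q - m <= j)) <= i)) +
          2 * ((p - (t + (q - m <= j)) <= i) && (j \in S)))
       = (p - (t + (q - m <= j))) + 2 * ((j \in S) * t + ((q - m <= j) && (j \in S))).
    move=> j; rewrite big_split /= sum_lt_cnt; last by lia.
    rewrite -big_distrr /=; congr (_ + 2 * _).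
    case: (boolP (j \in S)) => hj.
      under eq_bigr => i _ do rewrite andbT.
      rewrite sum_ge_cnt mul1n; case: (q - m <= j) => /=; lia.
    by rewrite mul0n andbF; apply: big1 => i _; rewrite andbF.
  rewrite (eq_bigr _ (fun j _ => inner j)) big_split /= -big_distrr /=.
  have hb : \sum_(j < q) (t + (q - m <= j)) = t * q + m.
    rewrite big_split /= sum_ge_cnt sum_nat_const card_ord; lia.
  have hc : \sum_(j < q) (p - (t + (q - m <= j))) + \sum_(j < q) (t + (q - m <= j)) = p * q.
    rewrite -big_split /= (eq_bigr (fun _ => p)) ?sum_nat_const ?card_ord; first lia.
    move=> j _; case: (q - m <= j) => /=; lia.
  have hd : \sum_(j < q) ((j \in S) * t + ((q - m <= j) && (j \in S))) = t * sS + s1.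
    by rewrite big_split /= -big_distrl /= mulnC.
  by rewrite hd -hc hb addnK.
rewrite ePQ.
set NS := \sum_(j < q) \sum_(j' < q) ((j < j') && ~~ ((j \in S) && (j' \in S))).
set NB := \sum_(j < q) \sum_(j' < q) ((j < j') && ((j \in S) && (j' \in S))).
set TT := \sum_(j < q) \sum_(j' < q) ((j < j') && (predT j && predT j')).
have hNB : 2 * NB = sS * (sS - 1) by rewrite /NB pairs2.
have hTT : 2 * TT = q * (q - 1).
  rewrite /TT pairs2 (eq_bigr (fun _ => 1)) ?sum1_card ?card_ord //.
have hN : NS + NB = TT.
  rewrite /NS /NB /TT -big_split; apply: eq_bigr => j _; rewrite -big_split.
  apply: eq_bigr => j' _ /=; by case: (j < j'); case: ((j \in S) && (j' \in S)).
have eC : 'C(q, 2) = TT by have := bin2_double q; lia.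
rewrite eC es; apply: (AR s0 s1 NB NS TT) => //; by rewrite -es.
Qed.

Lemma div2_eq TT x r : TT = 2*x + r -> r < 2 -> TT %/ 2 = x.
Proof. lia. Qed.

Lemma core k s s1 : (s <= 4*k+1 \/ (s = 4*k+2 /\ k+1 <= s1) \/
   (s = 4*k+3 /\ 2*k+2 <= s1) \/ (s = 4*k+4 /\ 3*k+3 <= s1)) ->
  s*s <= 4*k*s + s + 4*s1.
Proof. case=> [h|[[-> h]|[[-> h]|[-> h]]]]; nia. Qed.

Lemma A1 k p : k < p -> ARITH p (4*k+1) k 0.
Proof.
move=> htp s0 s1 NB NS TT h0 h1 hNB hTT hN.
have eTT : TT = 8*k*k+2*k by lia.
rewrite (@div2_eq TT (4*k*k+k) 0); [|lia|by []].
have hle : k*(4*k+1)+0 <= p*(4*k+1) by rewrite addn0 leq_mul2r ltnW // orbT.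
have := @core k (s0+s1) s1 ltac:(lia).
have e2 : (s0+s1)*(s0+s1-1) = (s0+s1)*(s0+s1) - (s0+s1) by rewrite mulnBr muln1.
lia.
Qed.

Lemma A2 k p : k < p -> ARITH p (4*k+2) k (k+1).
Proof.
move=> htp s0 s1 NB NS TT h0 h1 hNB hTT hN.
have eTT : TT = 8*k*k+6*k+1 by lia.
rewrite (@div2_eq TT (4*k*k+3*k) 1); [|lia|by []].
have hle : k*(4*k+2)+(k+1) <= p*(4*k+2).
  have : (k+1)*(4*k+2) <= p*(4*k+2) by rewrite leq_mul2r; lia.
  lia.
have := @core k (s0+s1) s1 ltac:(lia).
have e2 : (s0+s1)*(s0+s1-1) = (s0+s1)*(s0+s1) - (s0+s1) by rewrite mulnBr muln1.
lia.
Qed.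

Lemma A3 k p : k < p -> ARITH p (4*k+3) k (2*k+2).
Proof.
move=> htp s0 s1 NB NS TT h0 h1 hNB hTT hN.
have eTT : TT = 8*k*k+10*k+3 by lia.
rewrite (@div2_eq TT (4*k*k+5*k+1) 1); [|lia|by []].
have hle : k*(4*k+3)+(2*k+2) <= p*(4*k+3).
  have : (k+1)*(4*k+3) <= p*(4*k+3) by rewrite leq_mul2r; lia.
  lia.
have := @core k (s0+s1) s1 ltac:(lia).
have e2 : (s0+s1)*(s0+s1-1) = (s0+s1)*(s0+s1) - (s0+s1) by rewrite mulnBr muln1.
lia.
Qed.

Lemma A0 k p : k < p -> ARITH p (4*k+4) k (3*k+3).
Proof.
move=> htp s0 s1 NB NS TT h0 h1 hNB hTT hN.
have eTT : TT = 8*k*k+14*k+6 by lia.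
rewrite (@div2_eq TT (4*k*k+7*k+3) 0); [|lia|by []].
have hle : k*(4*k+4)+(3*k+3) <= p*(4*k+4).
  have : (k+1)*(4*k+4) <= p*(4*k+4) by rewrite leq_mul2r; lia.
  lia.
have := @core k (s0+s1) s1 ltac:(lia).
have e2 : (s0+s1)*(s0+s1-1) = (s0+s1)*(s0+s1) - (s0+s1) by rewrite mulnBr muln1.
lia.
Qed.

Unset Implicit Arguments.

(* min{2, p/4} <= q  is equivalent to  2 <= q \/ p <= 4q *)
Theorem corollary4p8 (p q : nat) :
  0 < p -> 0 < q -> (2 <= q \/ p <= 4 * q) -> q <= 4 * p ->
  rot_diam_ge (Kpq_rel p q) (p * q + 'C(q, 2) %/ 2).
Proof.
move=> hp hq _ hqp.
have [k [r [eq hr]]] : exists k r, q = 4*k + r /\ r < 4.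
  by exists (q %/ 4), (q %% 4); split; lia.
case: r hr eq => [|[|[|[|r]]]] // _ eq.
- have hk : 0 < k by lia.
  have eq' : q = 4*k.-1 + 4 by lia.
  rewrite eq'; apply: (@main_tm p _ k.-1 (3*k.-1+3)); try lia.
  apply: A0; lia.
- rewrite eq; apply: (@main_tm p _ k 0); try lia.
  apply: A1; lia.
- rewrite eq; apply: (@main_tm p _ k (k+1)); try lia.
  apply: A2; lia.
- rewrite eq; apply: (@main_tm p _ k (2*k+2)); try lia.
  apply: A3; lia.
Qed.
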